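(* For every $a_1,\dots,a_{2^n}\in F$ and every $w\in F^d$: (1) there is a prover strategy $r$ such that Alice's output equals $\tilde A(w)$ with probability $1$; (2) for every prover strategy $r$, Alice's output lies in $\{\tilde A(w),Err\}$ with probability at least $1-1/n^{c-1.5}$.
   Context: Parameters. - $n>4$ is a power of $2$ with $\log_2 n$ even, and $d:=2n/\log_2 n$ is assumed to be an integer. - $F$ is a finite field with $|F|=2^a=n^c$, where $c\ge 2$ is a constant integer. - $H\subset F$ is a fixed subset with $|H|=\sqrt n$ (so $|H^d|=2^n$), and $\pi:H^d\to[2^n]$ is a fixed bijection. Low degree extension. - For $a_1,\dots,a_{2^n}\in F$, define $A:H^d\to F$ by $A(z)=a_{\pi(z)}$. - The low degree extension $\tilde A:F^d\to F$ is the unique polynomial of degree at most $|H|-1$ in each variable that agrees with $A$ on $H^d$. Its total degree is less than $n^{1.5}$. - The quantum low degree extension is $|\Psi(a_1,\dots,a_{2^n})\rangle=|F|^{-d/2}\sum_{z\in F^d}|z_1\rangle\cdots|z_d\rangle|\tilde A(z)\rangle$, a state of $O(n)$ qubits where each register holds an element of $F$. Measuring it in the standard basis yields a uniformly random $z\in F^d$ together with $\tilde A(z)$. Retrieval protocol (Alice holds $|\Psi(a_1,\dots,a_{2^n})\rangle$ and wants $\tilde A(w)$). - Alice measures the state, obtaining a uniform $z\in F^d$ and $\tilde A(z)$. If $z=w$, she outputs $\tilde A(z)$. - Otherwise she sends the line $\ell=\{w+(z-w)t:t\in F\}$ to the prover Merlin. Merlin knows $w$ and $\ell$ but not $z$.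 - A prover strategy $r$ is a deterministic assignment, to each line $\ell$ through $w$, of a function $g_\ell:\ell\to F$. - Let $g(t)=g_\ell(w+(z-w)t)$. Alice outputs $Err$ if $g$ is not a univariate polynomial of degree $<n^{1.5}$, or if $g(1)\ne\tilde A(z)$. Otherwise she outputs $g(0)$. *)

(* Defs.v *)
From HB Require Import structures.
From Stdlib Require Import ClassicalEpsilon.
From mathcomp Require Import all_boot all_order all_algebra.
From mathcomp Require Import mpoly.
Set Implicit Arguments. Unset Strict Implicit. Unset Printing Implicit Defensive.
Import Order.TTheory GRing.Theory Num.Theory.
Local Open Scope ring_scope.

Notation pt F d := {ffun 'I_d -> F}.

Definition inHd (F : finFieldType) (d : nat) (H : {set F}) (z : pt F d) : bool :=
  [forall i, z i \in H].

Definition indiv_deg_lt (F : finFieldType) (d : nat) (p : {mpoly F[d]}) (k : nat) : Prop :=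
  forall m, m \in msupp p -> forall i : 'I_d, (m i < k)%N.

Definition is_lde (F : finFieldType) (d : nat) (H : {set F}) (A : pt F d -> F)
  (At : {mpoly F[d]}) : Prop :=
  indiv_deg_lt At #|H| /\ forall z : pt F d, inHd H z -> At.@[z] = A z.

Definition linept (F : finFieldType) (d : nat) (w z : pt F d) (t : F) : pt F d :=
  [ffun i => w i + (z i - w i) * t].

Definition line (F : finFieldType) (d : nat) (w z : pt F d) : {set pt F d} :=
  [set linept w z t | t : F].

(* A prover strategy: a deterministic assignment to each line (given as a set
   of points) of a function g_l on it (values off the line are irrelevant). *)
Definition strategy (F : finFieldType) (d : nat) := {set pt F d} -> pt F d -> F.

Definition is_poly_deg_lt (F : finFieldType) (g : F -> F) (D : nat) : Prop :=
  exists p : {poly F}, (size p <= D)%N /\ forall t, g t = p.[t].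

(* Alice's output on measurement outcome z (None = Err). Her output as a
   function of z; the degree bound D stands for n^1.5. *)
Definition alice_out (F : finFieldType) (d : nat) (D : nat) (At : {mpoly F[d]})
  (w : pt F d) (r : strategy F d) (z : pt F d) : option F :=
  if z == w then Some At.@[z] else
  let g := fun t => r (line w z) (linept w z t) in
  if excluded_middle_informative (is_poly_deg_lt g D) then
    (if g 1 == At.@[z] then Some (g 0) else None)
  else None.

Definition prob_unif (F : finFieldType) (d : nat) (P : pred (pt F d)) : rat :=
  (#|[set z | P z]|)%:R / (#|{: pt F d}|)%:R.

(* Main.v *)
Require Import Defs.
From HB Require Import structures.
From Stdlib Require Import ClassicalEpsilon.
From mathcomp Require Import all_boot all_order all_algebra.
From mathcomp Require Import mpoly.
From mathcomp Require Import ring zify.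
Import Order.TTheory GRing.Theory Num.Theory.
Local Open Scope ring_scope.
Set Implicit Arguments. Unset Strict Implicit.

Section H.
Variables (F : finFieldType) (d : nat).

Lemma size_lin (a b : F) : (size (a%:P + b%:P * 'X)%R <= 2)%N.
Proof.
rewrite mul_polyC; apply: leq_trans (size_polyD _ _) _.
rewrite geq_max (leq_trans (size_polyC_leq1 a)) //.
by rewrite (leq_trans (size_scale_leq _ _)) // size_polyX.
Qed.

Lemma line_poly (At : {mpoly F[d]}) (N : nat) (hA : indiv_deg_lt At N)
  (w z : pt F d) :
  exists2 q : {poly F}, (size q <= d * N.-1 + 1)%N &
    forall t, q.[t] = At.@[linept w z t].
Proof.
pose f := fun i : 'I_d => (w i)%:P + (z i - w i)%:P * 'X.
exists (\sum_(m <- msupp At) At@_m *: \prod_i f i ^+ m i).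
  apply: leq_trans (size_sum _ _ _) _; apply/bigmax_leqP_seq => m hm _.
  apply: leq_trans (size_scale_leq _ _) _.
  apply: leq_trans (size_poly_prod_leq _ _) _.
  have hs : (\sum_(i < d) size (f i ^+ m i) <= \sum_(i < d) N.-1.+1)%N.
    apply: leq_sum => i _; apply: leq_trans (size_poly_exp_leq _ _) _.
    have := size_lin (w i) (z i - w i); have := hA m hm i.
    rewrite /f; set s := size _; move=> h1 h2.
    have : ((s.-1 * m i) <= 1 * m i)%N by rewrite leq_mul //; lia.
    move: (s.-1) (m i) h1 => u v hv; rewrite mul1n => huv.
    by rewrite prednK ?(leq_ltn_trans huv hv) // (leq_ltn_trans (leq0n v) hv).
  rewrite sum_nat_const card_ord in hs.
  rewrite cardE size_enum_ord.
  move: hs; rewrite mulnS; move: (\sum_(i < d) _)%N (N.-1) => S K; lia.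
move=> t; rewrite mevalE horner_sum; apply: eq_bigr => m _.
rewrite hornerZ horner_prod; congr (_ * _); apply: eq_bigr => i _.
by rewrite horner_exp /f !hornerE ffunE.
Qed.

Lemma linept0 (w z : pt F d) : linept w z 0 = w.
Proof. by apply/ffunP => i; rewrite ffunE mulr0 addr0. Qed.

Lemma linept1 (w z : pt F d) : linept w z 1 = z.
Proof. by apply/ffunP => i; rewrite ffunE mulr1 addrC subrK. Qed.

Lemma lineptww (w : pt F d) t : linept w w t = w.
Proof. by apply/ffunP => i; rewrite ffunE subrr mul0r addr0. Qed.

Lemma linept_comp (w z : pt F d) a t :
  linept w (linept w z a) t = linept w z (a * t).
Proof. by apply/ffunP => i; rewrite !ffunE; ring. Qed.

Lemma line_scale (w z : pt F d) a : a != 0 -> line w (linept w z a) = line w z.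
Proof.
move=> a0; apply/setP => x; apply/imsetP/imsetP => -[t _ ->].
  by exists (a * t) => //; rewrite linept_comp.
by exists (t / a) => //; rewrite linept_comp mulrC divfK.
Qed.

Lemma linept_inj (w : pt F d) l : l != 0 -> injective (fun z => linept w z l).
Proof.
move=> l0 z1 z2 /ffunP e; apply/ffunP => i; move: (e i); rewrite !ffunE.
by move/addrI/(mulIf l0)/subIr.
Qed.

Definition bad D (At : {mpoly F[d]}) w r (z : pt F d) :=
  alice_out D At w r z \notin [:: Some At.@[w]; None].

Lemma bad_spec D At w r z : bad D At w r z ->
  z != w /\ exists2 p : {poly F}, (size p <= D)%N &
   [/\ forall t, r (line w z) (linept w z t) = p.[t],
       r (line w z) (linept w z 1) = At.@[z] &
       r (line w z) (linept w z 0) != At.@[w]].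
Proof.
rewrite /bad /alice_out; case: eqP => [->|/eqP zw]; first by rewrite !inE eqxx.
destruct (excluded_middle_informative _) as [[p [hp hpt]]|]; last by rewrite /= ?inE ?eqxx ?orbT.
rewrite /=; case: eqP => [h1|]; last by rewrite /= ?inE ?eqxx ?orbT.
rewrite !inE => /norP [h0 _]; split => //; exists p => //; split => //.
Qed.

Lemma count_bad D At N (hA : indiv_deg_lt At N) (hD : (d * N.-1 + 1 <= D)%N) w r z :
  (#|[set l : F | (l != 0%R) && bad D At w r (linept w z l)]| <= D.-1)%N.
Proof.
set S := [set _ | _]; case: (set_0Vmem S) => [->|[l0]]; first by rewrite cards0.
rewrite inE => /andP [l0nz /bad_spec [zl0w [p hp [hpt _ hp0]]]].
have [q hq hqt] := line_poly hA w (linept w z l0).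
rewrite line_scale // in hpt hp0.
set rs := [seq l / l0 | l <- enum S].
have : (size rs < size (p - q)%R)%N.
  apply: max_poly_roots.
  - apply: contra hp0 => /eqP e.
    have : p.[0] = q.[0] by rewrite (subr0_eq e).
    by rewrite -hpt hqt linept0 => ->.
  - apply/allP => x /mapP [l hl ->]; rewrite mem_enum inE in hl.
    case/andP: hl => lnz /bad_spec [_ [p' _ [_ h1 _]]].
    rewrite line_scale // linept1 in h1.
    by rewrite rootE hornerD hornerN -hpt hqt !linept_comp mulrC divfK // h1 subrr.
  - rewrite map_inj_uniq ?enum_uniq // => x y /= /(congr1 (fun u => u * l0)).
    by rewrite !divfK.
rewrite size_map -cardE => h.
have : (size (p - q)%R <= D)%N.
  by apply: leq_trans (size_polyD _ _) _; rewrite size_polyN geq_max hp (leq_trans hq).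
move=> h2; move: (leq_trans h h2); by case: (D).
Qed.

Lemma count_total (P : pred (pt F d)) w K
  (hS : forall z, (#|[set l : F | (l != 0%R) && P (linept w z l)]| <= K)%N) :
  (#|[set z | P z]| * #|F|.-1 <= #|{: pt F d}| * K)%N.
Proof.
have e1 l : l != 0 -> #|[set z | P (linept w z l)]| = #|[set z | P z]|.
  move=> l0; rewrite -[RHS](card_preimset _ (@linept_inj w l l0)).
  by apply: eq_card => z; rewrite !inE.
have hF : #|F|.-1 = #|predC1 (0:F)| by rewrite cardC1.
rewrite hF mulnC -sum_nat_const.
rewrite (eq_bigr (fun l => #|[set z | P (linept w z l)]|)); last first.
  by move=> l /= l0; rewrite e1.
under eq_bigr do rewrite -sum1_card big_mkcond /=.
rewrite exchange_big /=.
apply: (@leq_trans (\sum_(z : pt F d) K)); last first.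
  by rewrite -sum_nat_const; apply/eq_leq/eq_bigl.
apply: (big_ind2 (fun a b => a <= b)%N) => //; first by move=> ? ? ? ? ? ?; apply: leq_add.
move=> z _.
apply: leq_trans (hS z); rewrite -sum1_card [X in (_ <= X)%N]big_mkcond [X in (X <= _)%N]big_mkcond /=.
apply: (big_ind2 (fun a b => a <= b)%N) => //; first by move=> ? ? ? ? ? ?; apply: leq_add.
move=> l _; rewrite !inE.
by case: (l != 0) => //=; case: (P _).
Qed.
End H.

Theorem mainTheorem3
  (n k : nat) (hn4 : (4 < n)%N) (hnk : n = (2 ^ k)%N) (hk : ~~ odd k)
  (d : nat) (hd : (d * k = 2 * n)%N)
  (F : finFieldType) (e c : nat) (hc : (2 <= c)%N)
  (hFe : #|F| = (2 ^ e)%N) (hFc : #|F| = (n ^ c)%N)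
  (H : {set F}) (hH : (#|H| ^ 2)%N = n)
  (pi : pt F d -> 'I_(2 ^ n))
  (hpi_inj : {in [pred z | inHd H z] &, injective pi})
  (hpi_surj : forall i : 'I_(2 ^ n), exists2 z, inHd H z & pi z = i) :
  forall (a : 'I_(2 ^ n) -> F) (At : {mpoly F[d]}),
    is_lde H (fun z => a (pi z)) At ->
  forall w : pt F d,
    (exists r : strategy F d,
        prob_unif (fun z => alice_out (n * #|H|) At w r z == Some At.@[w]) = 1)
    /\
    (forall r : strategy F d,
        1 - 1 / ((n ^ c)%:R / (n * #|H|)%:R) <=
        prob_unif (fun z => alice_out (n * #|H|) At w r z \in [:: Some At.@[w]; None])).
Proof.
move=> a At [hA _] w.
have hk2 : (2 <= k)%N.
  case: k hnk hn4 {hk hd} => [|[|[|k']]] -> //.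
have hdn : (d <= n)%N.
  have : (d * 2 <= d * k)%N by rewrite leq_mul2l hk2 orbT.
  rewrite hd; lia.
have hN1 : (1 <= #|H|)%N.
  by case: #|H| hH hn4 => [|m] // <-.
have hD : (d * #|H|.-1 + 1 <= n * #|H|)%N.
  move: hN1; case: #|H| => // N' _ /=.
  have : (d * N' <= n * N')%N by rewrite leq_mul2r hdn orbT.
  rewrite mulnS; lia.
have hT : (0 < #|{: pt F d}|)%N by apply/card_gt0P; exists w.
split.
  exists (fun _ p => At.@[p]).
  have hz z : alice_out (n * #|H|) At w (fun _ p => At.@[p]) z == Some At.@[w].
    rewrite /alice_out; case: ifP => [/eqP ->|_]; first by [].
    destruct (excluded_middle_informative _) as [hP|nP].
      by rewrite /= linept1 eqxx linept0.
    exfalso; apply: nP; have [q hq hqt] := line_poly hA w z.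
    by exists q; split; [apply: leq_trans hD | move=> t; rewrite hqt].
  rewrite /prob_unif.
  have -> : [set z | alice_out (n * #|H|) At w (fun _ p => At.@[p]) z == Some At.@[w]] = setT.
    by apply/setP => z; rewrite !inE; apply: hz.
  by rewrite cardsT divff // pnatr_eq0 -lt0n.
move=> r.
have hcnt := count_total (count_bad hA hD w r).
set B := #|[set z | bad _ _ _ _ z]| in hcnt.
set T := #|{: pt F d}| in hcnt hT.
have hBT : (B <= T)%N by apply: max_card.
have hgood : #|[set z | alice_out (n * #|H|) At w r z \in [:: Some At.@[w]; None]]| = (T - B)%N.
  have -> : [set z | alice_out (n * #|H|) At w r z \in [:: Some At.@[w]; None]] = ~: [set z | bad (n * #|H|) At w r z].
    by apply/setP => z; rewrite inE in_setC inE /bad negbK.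
  have := cardsC [set z | bad (n * #|H|) At w r z]; rewrite -/B -/T.
  move: (#|~: _|) => X; lia.
have hQ : (0 < n ^ c)%N by rewrite expn_gt0; lia.
have hDp : (0 < n * #|H|)%N by rewrite muln_gt0; lia.
have hnat : (B * n ^ c <= n * #|H| * T)%N.
  rewrite hFc in hcnt; move: hcnt hBT.
  case: (n ^ c)%N hQ => // Q' _; case: (n * #|H|)%N hDp => // D' _ /=.
  rewrite !mulnS; lia.
rewrite /prob_unif hgood div1r invf_div natrB // mulrBl divff ?pnatr_eq0 -?lt0n //.
rewrite lerD2l lerN2 ler_pdivrMr ?ltr0n // mulrAC ler_pdivlMr ?ltr0n //.
by rewrite -!natrM ler_nat.
Qed.
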